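(* Let $a,b>0$, $c\ge 0$, $s_0>1$, and let $(u_0,v_0)$ with $u_0,v_0>0$ satisfy $$u_0^3+cu_0=\frac{a+1}{b}u_0^2+\frac{ac}{b},\qquad v_0=u_0^2+c .$$ Consider, for the parameter $\gamma>0$, the delay differential system $$u'(t)=\gamma\left\{\frac{[u(t)+u_0]^2}{v(t-s_0)+v_0}-b[u(t)+u_0]+a\right\},\qquad v'(t)=\gamma\left\{[u(t-1)+u_0]^2-[v(t)+v_0]+c\right\},$$ which has the equilibrium $(u,v)=(0,0)$. Put $$b_0=b-\frac{2u_0}{v_0},\quad b_1=b_0+1,\quad b_2=\frac{2u_0^3}{v_0^2},\quad \tau=\frac{s_0+1}{2},$$ and let $M(\lambda,\gamma)=\lambda^2+\gamma b_1\lambda+\gamma^2 b_0+\gamma^2 b_2e^{-2\tau\lambda}$ be the characteristic function of the linearization at $0$. (i) Suppose $b_1\neq 0$ and $b_0^2-b_2^2<0$. Let $\delta=b_1^2(b_1^2-4b_0)+4b_2^2$, $\Omega_+=\dfrac{-b_1^2+\sqrt{\delta}}{2b_2}$, let $$\omega_0=\frac{\arccos(\Omega_+)+2\pi j}{2\tau}$$ for some $j\in\mathbb{Z}$, where the branch of $\arccos$ is chosen so that $\omega_0>0$ and $\sin(2\omega_0\tau)$ has the same sign as $b_1$, and let $$\gamma_0=\frac{b_1\omega_0}{b_2\sin(2\omega_0\tau)} .$$ (ii) Alternatively, suppose $b_1=0$ and $b_2>1$, and for some $k\in\mathbb{N}$ let $$\gamma_0=\frac{k\pi}{\tau\sqrt{b_2-1}},\qquad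 \omega_0=\frac{k\pi}{\tau}.$$ In either case the system undergoes a Hopf bifurcation at $\gamma=\gamma_0$ with frequency $\omega_0$: $\lambda=i\omega_0$ is a root of $M(\lambda,\gamma_0)=0$, this root is simple, the transversality condition $$\operatorname{Re}\left(\frac{d\lambda}{d\gamma}\right)\Big|_{\lambda=i\omega_0,\ \gamma=\gamma_0}=\frac{4\tau\gamma_0\omega_0^4+2\tau\gamma_0^3\omega_0^2(b_1^2-2b_0)}{(\gamma_0^2b_1-2\gamma_0\tau\omega_0^2+2\gamma_0^3\tau b_0)^2+(2\gamma_0\omega_0+2\gamma_0^2\tau b_1\omega_0)^2}>0$$ holds (where $\lambda(\gamma)$ is the root branch through $i\omega_0$), and no $ni\omega_0$ with $n\in\mathbb{Z}\setminus\{\pm1\}$ is a root of $M(\lambda,\gamma_0)=0$.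
   Context: The characteristic function $M(\lambda,\gamma)$ is the determinant of the characteristic matrix $\Delta(\lambda,\gamma)=\lambda I_2-\gamma(A+e^{-\lambda}B_1+e^{-\lambda s_0}B_2)$, where $A=\begin{pmatrix}\frac{2u_0}{v_0}-b&0\\0&-1\end{pmatrix}$, $B_1=\begin{pmatrix}0&0\\2u_0&0\end{pmatrix}$, $B_2=\begin{pmatrix}0&-\frac{u_0^2}{v_0^2}\\0&0\end{pmatrix}$ are the partial Jacobians of the right-hand side at $0$ with respect to the undelayed state, the state delayed by $1$, and the state delayed by $s_0$, respectively. *)

(* Defs.v *)
From Stdlib Require Import Reals ZArith.
From Coquelicot Require Import Coquelicot.
Open Scope R_scope.

Definition Cexp (z : C) : C :=
  (exp (Re z) * cos (Im z), exp (Re z) * sin (Im z)).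

Definition b0 (b u0 v0 : R) : R := b - 2 * u0 / v0.
Definition b1 (b u0 v0 : R) : R := b0 b u0 v0 + 1.
Definition b2 (u0 v0 : R) : R := 2 * u0 ^ 3 / v0 ^ 2.
Definition tau (s0 : R) : R := (s0 + 1) / 2.

(* Characteristic function of the linearization at 0:
   M(lam, g) = lam^2 + g b1 lam + g^2 b0 + g^2 b2 e^{-2 tau lam}
   (= det (lam I - g (A + e^{-lam} B1 + e^{-lam s0} B2))). *)
Definition M_char (B0 B1 B2 T : R) (lam : C) (g : R) : C :=
  (lam * lam + RtoC (g * B1) * lam + RtoC (g ^ 2 * B0)
   + RtoC (g ^ 2 * B2) * Cexp (RtoC (- (2 * T)) * lam))%C.

Definition hopf_case_i (B0 B1 B2 T omega0 gamma0 : R) : Prop :=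
  B1 <> 0 /\ B0 ^ 2 - B2 ^ 2 < 0 /\
  let delta := B1 ^ 2 * (B1 ^ 2 - 4 * B0) + 4 * B2 ^ 2 in
  let Omega := (- B1 ^ 2 + sqrt delta) / (2 * B2) in
  exists (j : Z) (theta : R),
    (theta = acos Omega \/ theta = - acos Omega) /\
    omega0 = (theta + 2 * PI * IZR j) / (2 * T) /\
    0 < omega0 /\
    0 < B1 * sin (2 * omega0 * T) /\
    gamma0 = B1 * omega0 / (B2 * sin (2 * omega0 * T)).

Definition hopf_case_ii (B1 B2 T omega0 gamma0 : R) : Prop :=
  B1 = 0 /\ 1 < B2 /\
  exists k : nat, (0 < k)%nat /\
    gamma0 = INR k * PI / (T * sqrt (B2 - 1)) /\
    omega0 = INR k * PI / T.

Definition transversality_value (B0 B1 T omega0 gamma0 : R) : R :=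
  (4 * T * gamma0 * omega0 ^ 4
   + 2 * T * gamma0 ^ 3 * omega0 ^ 2 * (B1 ^ 2 - 2 * B0)) /
  ((gamma0 ^ 2 * B1 - 2 * gamma0 * T * omega0 ^ 2 + 2 * gamma0 ^ 3 * T * B0) ^ 2
   + (2 * gamma0 * omega0 + 2 * gamma0 ^ 2 * T * B1 * omega0) ^ 2).

Definition root_branch (B0 B1 B2 T omega0 gamma0 : R) (lam : R -> C) : Prop :=
  lam gamma0 = (0, omega0) /\
  exists eps : R, 0 < eps /\
    forall g : R, Rabs (g - gamma0) < eps -> M_char B0 B1 B2 T (lam g) g = 0%C.

(* Main.v *)
Require Import Defs.
From Stdlib Require Import Reals ZArith.
From Coquelicot Require Import Coquelicot.
From Stdlib Require Import Lra Lia Psatz ClassicalEpsilon.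
Open Scope R_scope.

Lemma mvt_lin (f df : R -> R) (x K : R) :
  (forall c, is_derive f c (df c)) -> f 0 = 0 ->
  (forall c, Rabs c <= Rabs x -> Rabs (df c) <= K) ->
  Rabs (f x) <= K * Rabs x.
Proof.
  intros Hd H0 Hb.
  destruct (MVT_gen f 0 x df) as [c [Hc Hfc]].
  - intros; apply Hd.
  - intros y _. apply continuity_pt_filterlim.
    apply (ex_derive_continuous (K:=R_AbsRing) (V:=R_NormedModule)).
    eexists; apply Hd.
  - rewrite H0, Rminus_0_r in Hfc. rewrite Hfc, Rminus_0_r, Rabs_mult.
    apply Rmult_le_compat_r. apply Rabs_pos. apply Hb.
    unfold Rmin, Rmax in Hc; destruct (Rle_dec 0 x);
    unfold Rabs; repeat destruct Rcase_abs; lra.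
Qed.

Lemma mvt_quad (f df : R -> R) (x K : R) :
  (forall c, is_derive f c (df c)) -> f 0 = 0 -> 0 <= K ->
  (forall c, Rabs c <= Rabs x -> Rabs (df c) <= K * Rabs c) ->
  Rabs (f x) <= K * x ^ 2.
Proof.
  intros Hd H0 HK Hb.
  apply Rle_trans with ((K * Rabs x) * Rabs x).
  - apply mvt_lin with df; auto.
    intros c Hc. apply Rle_trans with (K * Rabs c); auto.
    apply Rmult_le_compat_l; auto.
  - replace (x^2) with (Rabs x * Rabs x). lra.
    rewrite <- Rabs_mult. rewrite Rabs_right. ring. nra.
Qed.

Lemma sin_lin y : Rabs (sin y) <= Rabs y.
Proof.
  rewrite <- (Rmult_1_l (Rabs y)). apply (mvt_lin sin cos y 1).
  - intros; auto_derive; auto; ring.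
  - apply sin_0.
  - intros; pose proof (COS_bound c); unfold Rabs; destruct Rcase_abs; lra.
Qed.

Lemma cos_quad y : Rabs (cos y - 1) <= y ^ 2.
Proof.
  rewrite <- (Rmult_1_l (y^2)). apply (mvt_quad (fun c => cos c - 1) (fun c => - sin c) y 1).
  - intros; auto_derive; auto; ring.
  - rewrite cos_0; ring.
  - lra.
  - intros c _. rewrite Rabs_Ropp, Rmult_1_l. apply sin_lin.
Qed.

Lemma exp_le3 c : Rabs c <= 1 -> Rabs (exp c) <= 3.
Proof.
  intros H. rewrite Rabs_right by (left; apply exp_pos).
  apply Rle_trans with (exp 1); [|apply exp_le_3].
  destruct (Req_dec c 1). subst; lra. left; apply exp_increasing.
  unfold Rabs in H; destruct Rcase_abs; lra.
Qed.

Lemma exp_lin x : Rabs x <= 1 -> Rabs (exp x - 1) <= 3 * Rabs x.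
Proof.
  intros Hx. apply (mvt_lin (fun c => exp c - 1) exp x 3).
  - intros; auto_derive; auto; ring.
  - rewrite exp_0; ring.
  - intros c Hc. apply exp_le3; lra.
Qed.

Lemma exp_quad x : Rabs x <= 1 -> Rabs (exp x - 1 - x) <= 3 * x ^ 2.
Proof.
  intros Hx. apply (mvt_quad (fun c => exp c - 1 - c) (fun c => exp c - 1) x 3).
  - intros; auto_derive; auto; ring.
  - rewrite exp_0; ring.
  - lra.
  - intros c Hc. apply exp_lin. lra.
Qed.

Lemma sin_quad y : Rabs y <= 1 -> Rabs (sin y - y) <= y ^ 2.
Proof.
  intros Hy. rewrite <- (Rmult_1_l (y^2)). apply (mvt_quad (fun c => sin c - c) (fun c => cos c - 1) y 1).
  - intros; auto_derive; auto; ring.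
  - rewrite sin_0; ring.
  - lra.
  - intros c Hc. apply Rle_trans with (c^2). apply cos_quad.
    rewrite Rmult_1_l. replace (c^2) with (Rabs c * Rabs c).
    rewrite <- (Rmult_1_l (Rabs c)) at 3. apply Rmult_le_compat_r. apply Rabs_pos. lra.
    rewrite <- Rabs_mult, Rabs_right. ring. nra.
Qed.

Lemma Cmod_le_sum z : Cmod z <= Rabs (Re z) + Rabs (Im z).
Proof.
  destruct z as [a b]; unfold Cmod, Re, Im; simpl.
  rewrite <- (sqrt_Rsqr (Rabs a + Rabs b)) by (pose proof (Rabs_pos a); pose proof (Rabs_pos b); lra).
  apply sqrt_le_1_alt. unfold Rsqr.
  pose proof (Rabs_pos a); pose proof (Rabs_pos b).
  assert (a^2 = Rabs a * Rabs a) by (rewrite <- Rabs_mult, Rabs_right; [ring|nra]).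
  assert (b^2 = Rabs b * Rabs b) by (rewrite <- Rabs_mult, Rabs_right; [ring|nra]).
  nra.
Qed.

Lemma im_le_Cmod z : Rabs (Im z) <= Cmod z.
Proof.
  pose proof (Rmax_Cmod z). unfold Im. 
  apply Rle_trans with (Rmax (Rabs (fst z)) (Rabs (snd z))); auto. apply Rmax_r.
Qed.

Lemma re_le_Cmod' z : Rabs (Re z) <= Cmod z.
Proof. apply re_le_Cmod. Qed.

Lemma Cexp_add z w : Cexp (z + w) = (Cexp z * Cexp w)%C.
Proof.
  destruct z as [a b], w as [c d]; unfold Cexp, Cmult; simpl.
  rewrite exp_plus, cos_plus, sin_plus. f_equal; ring.
Qed.

Lemma Cmod_Cexp z : Cmod (Cexp z) = exp (Re z).
Proof.
  destruct z as [a b]; unfold Cexp, Cmod, Re; simpl fst; simpl snd.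
  pose proof (sin2_cos2 b) as E. unfold Rsqr in E.
  replace ((exp a * cos b) ^ 2 + (exp a * sin b) ^ 2) with ((exp a)^2)
    by (rewrite <- (Rmult_1_r ((exp a)^2)), <- E; ring).
  apply sqrt_pow2. left; apply exp_pos.
Qed.

Lemma Rabs_sq_le x z : Rabs x <= z -> x ^ 2 <= z ^ 2.
Proof. intros H. pose proof (Rabs_pos x). 
  assert (x^2 = Rabs x * Rabs x) by (rewrite <- Rabs_mult, Rabs_right; [ring|nra]). nra. Qed.

Lemma Cexp_quad h : Cmod h <= 1 -> Cmod (Cexp h - 1 - h)%C <= 10 * Cmod h ^ 2.
Proof.
  intros Hh. pose proof (re_le_Cmod h) as Hx. pose proof (im_le_Cmod h) as Hy.
  destruct h as [x y]. unfold Re, Im in *; simpl in Hx, Hy.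
  set (m := Cmod (x,y)) in *.
  apply Rle_trans with (1 := Cmod_le_sum _).
  unfold Cexp, Re, Im; simpl.
  replace (exp x * cos y + - 1 + - x) with ((exp x - 1 - x) + exp x * (cos y - 1)) by ring.
  replace (exp x * sin y + - 0 + - y) with ((exp x - 1) * sin y + (sin y - y)) by ring.
  assert (Hx1 : Rabs x <= 1) by lra. assert (Hy1 : Rabs y <= 1) by lra.
  pose proof (exp_quad x Hx1). pose proof (exp_lin x Hx1). pose proof (exp_le3 x Hx1).
  pose proof (cos_quad y). pose proof (sin_quad y Hy1). pose proof (sin_lin y).
  pose proof (Rabs_sq_le _ _ Hx). pose proof (Rabs_sq_le _ _ Hy).
  assert (y ^ 2 <= m ^ 2) by (apply Rabs_sq_le; auto).
  pose proof (Rabs_pos x). pose proof (Rabs_pos y).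
  assert (Rabs x * Rabs y <= m ^ 2) by nra.
  pose proof (Rabs_triang (exp x - 1 - x) (exp x * (cos y - 1))) as T1.
  pose proof (Rabs_triang ((exp x - 1) * sin y) (sin y - y)) as T2.
  rewrite Rabs_mult in T1, T2.
  assert (Rabs (exp x) * Rabs (cos y - 1) <= 3 * y^2).
  { apply Rmult_le_compat; auto using Rabs_pos. }
  assert (Rabs (exp x - 1) * Rabs (sin y) <= 3 * Rabs x * Rabs y).
  { apply Rmult_le_compat; auto using Rabs_pos. }
  replace (exp x * cos y + - (1) + - x) with ((exp x - 1 - x) + exp x * (cos y - 1)) by ring.
  replace (10 * (m * (m * 1))) with (10 * m^2) by ring.
  nra.
Qed.

Lemma Cexp_lin k : Cmod k <= 1 -> Cmod (Cexp k - 1)%C <= 11 * Cmod k.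
Proof.
  intros Hk. replace (Cexp k - 1)%C with ((Cexp k - 1 - k) + k)%C by ring.
  apply Rle_trans with (1 := Cmod_triangle _ _).
  pose proof (Cexp_quad k Hk). pose proof (Cmod_ge_0 k). nra.
Qed.

Lemma Cmod_diff_le l1 l2 mu : Cmod (l1 - l2)%C <= Cmod (l1 - mu)%C + Cmod (l2 - mu)%C.
Proof.
  replace (l1 - l2)%C with ((l1 - mu) + - (l2 - mu))%C by ring.
  rewrite <- (Cmod_opp (l2 - mu)). apply Cmod_triangle.
Qed.

Lemma SD_E (a : R) (mu : C) (eps : R) : 0 < eps -> exists delta, 0 < delta /\
  forall l1 l2, Cmod (l1 - mu) < delta -> Cmod (l2 - mu) < delta ->
  Cmod (Cexp (RtoC a * l1) - Cexp (RtoC a * l2) - RtoC a * Cexp (RtoC a * mu) * (l1 - l2))%C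
    <= eps * Cmod (l1 - l2)%C.
Proof.
  intros Heps.
  set (Em := Cexp (RtoC a * mu)).
  set (A := Rabs a). set (m := Cmod Em).
  assert (HA : 0 <= A) by apply Rabs_pos. assert (Hm : 0 <= m) by apply Cmod_ge_0.
  exists (Rmin (1 / (2 * A + 1)) (eps / (251 * m * A^2 + 1))).
  split. { apply Rmin_pos; apply Rdiv_lt_0_compat; nra. }
  intros l1 l2 H1 H2.
  set (h := (RtoC a * (l1 - l2))%C). set (k := (RtoC a * (l2 - mu))%C).
  assert (E1 : Cexp (RtoC a * l1) = (Cexp (RtoC a * l2) * Cexp h)%C).
  { rewrite <- Cexp_add. f_equal. unfold h. ring. }
  assert (E2 : Cexp (RtoC a * l2) = (Em * Cexp k)%C).
  { unfold Em. rewrite <- Cexp_add. f_equal. unfold k. ring. }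
  assert (Eq : (Cexp (RtoC a * l1) - Cexp (RtoC a * l2) - RtoC a * Em * (l1 - l2))%C
     = (Em * (Cexp k * (Cexp h - 1 - h) + h * (Cexp k - 1)))%C).
  { rewrite E1, E2. unfold h. ring. }
  fold Em. rewrite Eq. clear Eq E1 E2.
  set (d := Cmod (l1 - l2)%C). set (del := Rmin (1 / (2 * A + 1)) (eps / (251 * m * A^2 + 1))) in *.
  assert (Hd1 : del <= 1 / (2 * A + 1)) by apply Rmin_l.
  assert (Hd2 : del <= eps / (251 * m * A^2 + 1)) by apply Rmin_r.
  assert (Hdel : 0 <= del) by (pose proof (Cmod_ge_0 (l1 - mu)%C); lra).
  assert (Hd : d < 2 * del) by (pose proof (Cmod_diff_le l1 l2 mu); unfold d; lra).
  assert (Hd0 : 0 <= d) by apply Cmod_ge_0.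
  assert (Hh : Cmod h = A * d) by (unfold h; rewrite Cmod_mult, Cmod_R; auto).
  assert (Hk : Cmod k <= A * del) by (unfold k; rewrite Cmod_mult, Cmod_R;
     apply Rmult_le_compat_l; auto; lra).
  assert (HAd : A * del <= 1 / 2).
  { apply Rle_trans with (A * (1 / (2 * A + 1))). apply Rmult_le_compat_l; auto.
    apply Rmult_le_reg_r with (2 * A + 1). lra. field_simplify; lra. }
  assert (Hh1 : Cmod h <= 1) by nra.
  assert (Hk1 : Cmod k <= 1) by lra.
  pose proof (Cexp_quad h Hh1) as Q1. pose proof (Cexp_lin k Hk1) as Q2.
  assert (Q3 : Cmod (Cexp k) <= 12).
  { replace (Cexp k) with ((Cexp k - 1) + 1)%C by ring.
    apply Rle_trans with (1 := Cmod_triangle _ _). rewrite Cmod_1. lra. }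
  rewrite Cmod_mult. fold m.
  assert (B1 : Cmod (Cexp k * (Cexp h - 1 - h) + h * (Cexp k - 1))%C <= 251 * A^2 * del * d).
  { apply Rle_trans with (1 := Cmod_triangle _ _). rewrite !Cmod_mult.
    pose proof (Cmod_ge_0 (Cexp k)). pose proof (Cmod_ge_0 (Cexp h - 1 - h)%C).
    pose proof (Cmod_ge_0 (Cexp k - 1)%C). pose proof (Cmod_ge_0 h).
    assert (Cmod (Cexp k) * Cmod (Cexp h - 1 - h)%C <= 12 * (10 * (A * d)^2)).
    { apply Rmult_le_compat; auto. rewrite <- Hh; auto. }
    assert (Cmod h * Cmod (Cexp k - 1)%C <= (A * d) * (11 * (A * del))).
    { apply Rmult_le_compat; auto; lra. }
    assert ((A*d)^2 <= 2 * A^2 * del * d).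
    { replace ((A*d)^2) with ((A^2 * d) * d) by ring.
      replace (2 * A^2 * del * d) with ((A^2 * (2 * del)) * d) by ring.
      apply Rmult_le_compat_r; auto. apply Rmult_le_compat_l; nra. }
    nra. }
  apply Rle_trans with (m * (251 * A ^ 2 * del * d)).
  { apply Rmult_le_compat_l; auto. }
  assert (251 * m * A^2 * del <= eps).
  { apply Rle_trans with ((251 * m * A^2 + 1) * del). nra.
    apply Rle_trans with ((251 * m * A^2 + 1) * (eps / (251 * m * A^2 + 1))).
    apply Rmult_le_compat_l; nra. field_simplify; nra. }
  nra.
Qed.

Lemma is_derive_C_of (f : C -> C) z l :
  (forall eps, 0 < eps -> exists delta, 0 < delta /\ forall y, Cmod (y - z) < delta ->
     Cmod (f y - f z - (y - z) * l)%C <= eps * Cmod (y - z)%C) ->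
  is_derive (K := C_AbsRing) (V := C_NormedModule) f z l.
Proof.
  intros H. unfold is_derive, filterdiff. split.
  - apply is_linear_scal_l.
  - intros x' Hx'. apply (is_filter_lim_locally_unique (K:=C_AbsRing) (V:=AbsRing_NormedModule C_AbsRing)) in Hx'. subst x'.
    intros eps. apply (locally_le_locally_norm (K:=C_AbsRing) (V:=AbsRing_NormedModule C_AbsRing)).
    destruct (H eps (cond_pos eps)) as [d [Hd Hy]].
    exists (mkposreal d Hd). intros y Hy'. apply Hy. exact Hy'.
Qed.

Lemma normRC (z : C) : @norm R_AbsRing C_R_NormedModule z = Cmod z.
Proof. destruct z as [a b]. cbn. unfold prod_norm, Cmod. cbn. rewrite !Rmult_1_r, <- !Rabs_mult, !Rabs_right; try reflexivity; apply Rle_ge, Rle_0_sqr. Qed.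

Lemma is_derive_RC_of (f : R -> C) x l :
  (forall eps, 0 < eps -> exists delta, 0 < delta /\ forall y, Rabs (y - x) < delta ->
     Cmod (f y - f x - RtoC (y - x) * l)%C <= eps * Rabs (y - x)) ->
  is_derive (K := R_AbsRing) (V := C_R_NormedModule) f x l.
Proof.
  intros H. unfold is_derive, filterdiff. split.
  - apply is_linear_scal_l.
  - intros x' Hx'.
    apply (is_filter_lim_locally_unique (K:=R_AbsRing) (V:=AbsRing_NormedModule R_AbsRing)) in Hx'. subst x'.
    intros eps. apply (locally_le_locally_norm (K:=R_AbsRing) (V:=AbsRing_NormedModule R_AbsRing)).
    destruct (H eps (cond_pos eps)) as [d [Hd Hy]].
    exists (mkposreal d Hd). intros y Hy'. 
    rewrite scal_R_Cmult, normRC. apply Hy. exact Hy'.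
Qed.

Lemma is_derive_RC_to (f : R -> C) x l :
  is_derive (K := R_AbsRing) (V := C_R_NormedModule) f x l ->
  (forall eps, 0 < eps -> exists delta, 0 < delta /\ forall y, Rabs (y - x) < delta ->
     Cmod (f y - f x - RtoC (y - x) * l)%C <= eps * Rabs (y - x)).
Proof.
  intros [_ H] eps Heps.
  specialize (H x (fun P HP => HP) (mkposreal eps Heps)).
  apply (locally_norm_le_locally (K:=R_AbsRing) (V:=AbsRing_NormedModule R_AbsRing)) in H.
  destruct H as [d Hd]. exists d. split. apply cond_pos.
  intros y Hy. pose proof (Hd y Hy) as Q. simpl in Q. rewrite scal_R_Cmult, normRC in Q. exact Q.
Qed.

Lemma small_le (a K : R) : 0 <= K -> (forall eps, 0 < eps -> a <= eps * K) -> a <= 0.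
Proof.
  intros HK H. destruct (Rle_lt_dec a 0) as [h|h]; auto.
  specialize (H (a / (2 * (K + 1))) ltac:(apply Rdiv_lt_0_compat; lra)).
  exfalso. assert (a / (2 * (K + 1)) * K < a). 
  { apply Rle_lt_trans with (a / (2 * (K+1)) * (K + 1)). apply Rmult_le_compat_l.
    left; apply Rdiv_lt_0_compat; lra. lra. field_simplify; lra. }
  lra.
Qed.

Lemma Cmod_small_eq (z w : C) : (forall eps, 0 < eps -> Cmod (z - w) <= eps) -> z = w.
Proof.
  intros H. apply Ceq_minus. apply Cmod_eq_0. apply Rle_antisym.
  apply small_le with 1. lra. intros; rewrite Rmult_1_r; auto. apply Cmod_ge_0.
Qed.

Lemma re_diff_le (a b : C) : Rabs (Re a - Re b) <= Cmod (a - b)%C.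
Proof. apply (re_le_Cmod (a - b)%C). Qed.
Lemma im_diff_le (a b : C) : Rabs (Im a - Im b) <= Cmod (a - b)%C.
Proof. apply (im_le_Cmod (a - b)%C). Qed.

Lemma fixpoint (Phi : C -> C) (mu : C) (r : R) : 0 < r ->
  (forall l, Cmod (l - mu) <= r -> Cmod (Phi l - mu) <= r) ->
  (forall l1 l2, Cmod (l1 - mu) <= r -> Cmod (l2 - mu) <= r ->
     Cmod (Phi l1 - Phi l2) <= / 2 * Cmod (l1 - l2)) ->
  exists l, Cmod (l - mu) <= r /\ Phi l = l.
Proof.
  intros Hr Hin Hlip.
  set (x := fun n => Nat.iter n Phi mu).
  assert (Hx : forall n, Cmod (x n - mu) <= r).
  { induction n. simpl. replace (mu - mu)%C with (RtoC 0) by ring. rewrite Cmod_0. lra.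
    simpl. apply Hin. exact IHn. }
  assert (Hs : forall n, Cmod (x (S n) - x n) <= r * (/2) ^ n).
  { induction n. simpl. rewrite Rmult_1_r. apply Hin. replace (mu - mu)%C with (RtoC 0) by ring. rewrite Cmod_0. lra.
    change (Cmod (Phi (x (S n)) - Phi (x n)) <= r * (/2)^(S n)).
    eapply Rle_trans. apply Hlip; auto. simpl.
    replace (r * (/ 2 * (/ 2) ^ n)) with (/2 * (r * (/2)^n)) by ring.
    apply Rmult_le_compat_l; [lra | exact IHn]. }
  assert (Hc : forall n k, Cmod (x (n + k)%nat - x n) <= 2 * r * (/2) ^ n * (1 - (/2)^k)).
  { intros n k. induction k.
    - rewrite Nat.add_0_r. replace (x n - x n)%C with (RtoC 0) by ring. rewrite Cmod_0. simpl. lra.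
    - rewrite Nat.add_succ_r.
      replace (x (S (n + k)) - x n)%C with ((x (S (n+k)) - x (n+k)%nat) + (x (n + k)%nat - x n))%C by ring.
      eapply Rle_trans. apply Cmod_triangle. pose proof (Hs (n+k)%nat). rewrite pow_add in H.
      simpl. simpl in H. nra. }
  assert (Hgeo : forall eps, 0 < eps -> exists N, forall n, (n >= N)%nat -> 2 * r * (/2)^n < eps).
  { intros eps He. destruct (pow_lt_1_zero (/2) ltac:(rewrite Rabs_right; lra) (eps / (2 * r)) ltac:(apply Rdiv_lt_0_compat; lra)) as [N HN].
    exists N. intros n Hn. specialize (HN n Hn). rewrite Rabs_right in HN.
    apply Rmult_lt_compat_l with (r := 2 * r) in HN. field_simplify in HN. lra. lra. lra.
    apply Rle_ge, pow_le. lra. }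
  assert (Hcm : forall eps, 0 < eps -> exists N, forall n m, (n >= N)%nat -> (m >= N)%nat -> Cmod (x m - x n) < eps).
  { intros eps He. destruct (Hgeo eps He) as [N HN]. exists N. intros n m Hn Hm.
    destruct (le_lt_dec n m) as [h|h].
    - replace m with (n + (m - n))%nat by lia. eapply Rle_lt_trans. apply Hc.
      specialize (HN n Hn). pose proof (pow_le (/2) (m-n) ltac:(lra)). pose proof (pow_le (/2) n ltac:(lra)).
      assert (2 * r * (/2)^n * (1 - (/2)^(m-n)) <= 2 * r * (/2)^n).
      { rewrite <- (Rmult_1_r (2 * r * (/2)^n)) at 2. apply Rmult_le_compat_l. nra. lra. }
      lra.
    - replace n with (m + (n - m))%nat by lia. rewrite <- Cmod_opp.
      replace (- (x m - x (m + (n - m))%nat))%C with (x (m + (n - m))%nat - x m)%C by ring.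
      eapply Rle_lt_trans. apply Hc.
      specialize (HN m Hm). pose proof (pow_le (/2) (n-m) ltac:(lra)). pose proof (pow_le (/2) m ltac:(lra)).
      assert (2 * r * (/2)^m * (1 - (/2)^(n-m)) <= 2 * r * (/2)^m).
      { rewrite <- (Rmult_1_r (2 * r * (/2)^m)) at 2. apply Rmult_le_compat_l. nra. lra. }
      lra. }
  assert (Cre : Cauchy_crit (fun n => Re (x n))).
  { intros eps He. destruct (Hcm eps He) as [N HN]. exists N. intros n m Hn Hm.
    unfold Rdist. rewrite Rabs_minus_sym. eapply Rle_lt_trans. apply re_diff_le. auto. }
  assert (Cim : Cauchy_crit (fun n => Im (x n))).
  { intros eps He. destruct (Hcm eps He) as [N HN]. exists N. intros n m Hn Hm.
    unfold Rdist. rewrite Rabs_minus_sym. eapply Rle_lt_trans. apply im_diff_le. auto. }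
  destruct (Rcomplete.R_complete _ Cre) as [lr Hlr].
  destruct (Rcomplete.R_complete _ Cim) as [li Hli].
  set (L := (lr, li) : C).
  assert (Hconv : forall eps, 0 < eps -> exists N, forall n, (n >= N)%nat -> Cmod (x n - L) < eps).
  { intros eps He. destruct (Hlr (eps/2) ltac:(lra)) as [N1 H1]. destruct (Hli (eps/2) ltac:(lra)) as [N2 H2].
    exists (N1 + N2)%nat. intros n Hn. eapply Rle_lt_trans. apply Cmod_le_sum.
    specialize (H1 n ltac:(lia)). specialize (H2 n ltac:(lia)). unfold Rdist in H1, H2.
    change (Rabs (Re (x n) - lr) + Rabs (Im (x n) - li) < eps). lra. }
  assert (HL : Cmod (L - mu) <= r).
  { assert (Cmod (L - mu) - r <= 0).
    { apply small_le with 1. lra. intros eps He. destruct (Hconv eps He) as [N HN].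
      specialize (HN N (Nat.le_refl _)). specialize (Hx N).
      replace (L - mu)%C with (- (x N - L) + (x N - mu))%C by ring.
      pose proof (Cmod_triangle (- (x N - L))%C (x N - mu)%C). rewrite Cmod_opp in H. lra. }
    lra. }
  exists L. split; auto.
  apply Cmod_small_eq. intros eps He.
  destruct (Hconv (eps/2) ltac:(lra)) as [N HN].
  replace (Phi L - L)%C with ((Phi L - Phi (x N)) + (x (S N) - L))%C by (simpl; ring).
  eapply Rle_trans. apply Cmod_triangle.
  pose proof (Hlip L (x N) HL (Hx N)).
  specialize (HN N (Nat.le_refl _)) as HN1. specialize (HN (S N) ltac:(lia)).
  rewrite <- Cmod_opp in HN1. replace (- (x N - L))%C with (L - x N)%C in HN1 by ring.
  lra.
Qed.

Section IFT.
Variable F : C -> R -> C.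
Variables (mu : C) (g0 : R) (D0 Fg : C).
Hypothesis HD0 : D0 <> 0%C.
Hypothesis HF0 : F mu g0 = 0%C.
Hypothesis HSD : forall eps, 0 < eps -> exists delta, 0 < delta /\
  forall l1 l2 g, Cmod (l1 - mu) < delta -> Cmod (l2 - mu) < delta -> Rabs (g - g0) < delta ->
  Cmod (F l1 g - F l2 g - D0 * (l1 - l2))%C <= eps * Cmod (l1 - l2)%C.
Hypothesis HDg : forall eps, 0 < eps -> exists delta, 0 < delta /\
  forall g, Rabs (g - g0) < delta ->
  Cmod (F mu g - F mu g0 - RtoC (g - g0) * Fg)%C <= eps * Rabs (g - g0).

Lemma KL (lam : R -> C) (C0 e : R) : 0 < e -> 0 <= C0 ->
  (forall g, Rabs (g - g0) < e -> F (lam g) g = 0%C) ->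
  (forall g, Rabs (g - g0) < e -> Cmod (lam g - mu) <= C0 * Rabs (g - g0)) ->
  forall eps, 0 < eps -> exists delta, 0 < delta /\ forall g, Rabs (g - g0) < delta ->
  Cmod (D0 * (lam g - mu) + RtoC (g - g0) * Fg)%C <= eps * Rabs (g - g0).
Proof.
  intros He HC0 Hroot Hb eps Heps.
  destruct (HSD (eps / (2 * (C0 + 1))) ltac:(apply Rdiv_lt_0_compat; lra)) as [d1 [Hd1 H1]].
  destruct (HDg (eps / 2) ltac:(lra)) as [d2 [Hd2 H2]].
  exists (Rmin e (Rmin (d1 / (C0 + 1)) d2)). split.
  { apply Rmin_pos; auto. apply Rmin_pos; auto. apply Rdiv_lt_0_compat; lra. }
  intros g Hg.
  assert (Hg1 : Rabs (g - g0) < e) by (eapply Rlt_le_trans; [apply Hg| apply Rmin_l]).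
  assert (Hg2 : Rabs (g - g0) < d1 / (C0 + 1)) by
    (eapply Rlt_le_trans; [apply Hg| eapply Rle_trans; [apply Rmin_r | apply Rmin_l]]).
  assert (Hg3 : Rabs (g - g0) < d2) by
    (eapply Rlt_le_trans; [apply Hg| eapply Rle_trans; [apply Rmin_r | apply Rmin_r]]).
  pose proof (Rabs_pos (g - g0)) as Ha.
  assert (Hd1' : d1 / (C0 + 1) <= d1).
  { apply Rmult_le_reg_r with (C0 + 1). lra. field_simplify; nra. }
  assert (Hlm : Cmod (lam g - mu) < d1).
  { eapply Rle_lt_trans. apply Hb; auto.
    apply Rle_lt_trans with ((C0 + 1) * Rabs (g - g0)). nra.
    assert (Eq1 : (C0+1) * (d1/(C0+1)) = d1) by (field; lra).
    rewrite <- Eq1. apply Rmult_lt_compat_l; lra. }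
  assert (Hmm : Cmod (mu - mu) < d1) by (replace (mu - mu)%C with (RtoC 0) by ring; rewrite Cmod_0; lra).
  specialize (H1 (lam g) mu g Hlm Hmm ltac:(lra)).
  specialize (H2 g Hg3).
  rewrite (Hroot g Hg1) in H1. rewrite HF0 in H2.
  replace (D0 * (lam g - mu) + RtoC (g - g0) * Fg)%C with
    (- (0 - F mu g - D0 * (lam g - mu)) + - (F mu g - 0 - RtoC (g - g0) * Fg))%C by ring.
  eapply Rle_trans. apply Cmod_triangle. rewrite !Cmod_opp.
  assert (eps / (2 * (C0 + 1)) * Cmod (lam g - mu) <= eps / 2 * Rabs (g - g0)).
  { apply Rle_trans with (eps / (2 * (C0 + 1)) * (C0 * Rabs (g - g0))).
    apply Rmult_le_compat_l. left; apply Rdiv_lt_0_compat; lra. apply Hb; auto.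
    replace (eps / (2 * (C0 + 1)) * (C0 * Rabs (g - g0))) with (eps / 2 * Rabs (g - g0) * (C0 / (C0 + 1))) by (field; lra).
    rewrite <- (Rmult_1_r (eps / 2 * Rabs (g - g0))) at 2.
    apply Rmult_le_compat_l. nra. apply Rmult_le_reg_r with (C0 + 1). lra. field_simplify; lra. }
  lra.
Qed.

Lemma ift_exists : exists lam : R -> C, lam g0 = mu /\
  (exists e, 0 < e /\ forall g, Rabs (g - g0) < e -> F (lam g) g = 0%C) /\
  is_derive (K := R_AbsRing) (V := C_R_NormedModule) lam g0 (- Fg / D0)%C.
Proof.
  set (d0 := Cmod D0). assert (Hd0 : 0 < d0) by (apply Cmod_gt_0; auto).
  destruct (HSD (d0 / 2) ltac:(lra)) as [d1 [Hd1 H1]].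
  destruct (HDg 1 ltac:(lra)) as [d2 [Hd2 H2]].
  set (r := d1 / 2). set (Kf := Cmod Fg + 1).
  assert (HKf : 0 < Kf) by (pose proof (Cmod_ge_0 Fg); unfold Kf; lra).
  set (eta := Rmin d1 (Rmin d2 (r * d0 / (2 * Kf)))).
  assert (Heta : 0 < eta).
  { apply Rmin_pos; auto. apply Rmin_pos; auto. unfold r. apply Rdiv_lt_0_compat; nra. }
  set (C0 := 2 * Kf / d0).
  assert (HC0 : 0 <= C0) by (unfold C0; left; apply Rdiv_lt_0_compat; lra).
  assert (Hfix : forall g, Rabs (g - g0) < eta -> exists l, F l g = 0%C /\ Cmod (l - mu) <= C0 * Rabs (g - g0)).
  { intros g Hg.
    assert (Hg1 : Rabs (g - g0) < d1) by (eapply Rlt_le_trans; [apply Hg| apply Rmin_l]).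
    assert (Hg2 : Rabs (g - g0) < d2) by
      (eapply Rlt_le_trans; [apply Hg| eapply Rle_trans; [apply Rmin_r | apply Rmin_l]]).
    assert (Hg3 : Rabs (g - g0) < r * d0 / (2 * Kf)) by
      (eapply Rlt_le_trans; [apply Hg| eapply Rle_trans; [apply Rmin_r | apply Rmin_r]]).
    pose proof (Rabs_pos (g - g0)) as Ha.
    set (Phi := fun l => (l - F l g / D0)%C).
    assert (Hlip : forall l1 l2, Cmod (l1 - mu) < d1 -> Cmod (l2 - mu) < d1 ->
       Cmod (Phi l1 - Phi l2) <= / 2 * Cmod (l1 - l2)).
    { intros l1 l2 h1 h2. unfold Phi.
      replace (l1 - F l1 g / D0 - (l2 - F l2 g / D0))%C with
        (- (F l1 g - F l2 g - D0 * (l1 - l2)) / D0)%C by (field; auto).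
      rewrite Cmod_div, Cmod_opp; auto. fold d0.
      apply Rmult_le_reg_r with d0; auto. field_simplify; try lra.
      specialize (H1 l1 l2 g h1 h2 Hg1). lra. }
    assert (HFmu : Cmod (F mu g) <= Kf * Rabs (g - g0)).
    { specialize (H2 g Hg2). rewrite HF0 in H2.
      replace (F mu g) with ((F mu g - 0 - RtoC (g - g0) * Fg) + RtoC (g - g0) * Fg)%C by ring.
      eapply Rle_trans. apply Cmod_triangle. rewrite Cmod_mult, Cmod_R. unfold Kf. lra. }
    assert (HPmu : Cmod (Phi mu - mu) <= Kf * Rabs (g - g0) / d0).
    { unfold Phi. replace (mu - F mu g / D0 - mu)%C with (- (F mu g / D0))%C by ring.
      rewrite Cmod_opp, Cmod_div; auto. fold d0. unfold Rdiv. apply Rmult_le_compat_r.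
      left; apply Rinv_0_lt_compat; auto. auto. }
    assert (HPr : Kf * Rabs (g - g0) / d0 <= r / 2).
    { apply Rmult_le_reg_r with d0; auto. field_simplify; try lra.
      apply Rmult_lt_compat_l with (r := 2 * Kf) in Hg3; try lra. field_simplify in Hg3; lra. }
    assert (Hr : 0 < r) by (unfold r; lra).
    assert (Hrd : r < d1) by (unfold r; lra).
    destruct (fixpoint Phi mu r Hr) as [l [Hl HPl]].
    { intros l Hl. replace (Phi l - mu)%C with ((Phi l - Phi mu) + (Phi mu - mu))%C by ring.
      eapply Rle_trans. apply Cmod_triangle.
      assert (Cmod (Phi l - Phi mu) <= / 2 * Cmod (l - mu)).
      { apply Hlip. lra. replace (mu - mu)%C with (RtoC 0) by ring. rewrite Cmod_0. lra. }
      lra. }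
    { intros l1 l2 h1 h2. apply Hlip; lra. }
    exists l. split.
    - unfold Phi in HPl. assert (F l g / D0 = 0)%C as Hz.
      { replace (F l g / D0)%C with (l - (l - F l g / D0))%C by ring. rewrite HPl. ring. }
      replace (F l g) with (F l g / D0 * D0)%C by (field; auto). rewrite Hz. ring.
    - assert (Cmod (Phi l - Phi mu) <= / 2 * Cmod (l - mu)).
      { apply Hlip. lra. replace (mu - mu)%C with (RtoC 0) by ring. rewrite Cmod_0. lra. }
      assert (Cmod (l - mu) <= Cmod (Phi l - Phi mu) + Cmod (Phi mu - mu)).
      { rewrite <- HPl at 1. replace (Phi l - mu)%C with ((Phi l - Phi mu) + (Phi mu - mu))%C by ring.
        apply Cmod_triangle. }
      unfold C0. replace (2 * Kf / d0 * Rabs (g - g0)) with (2 * (Kf * Rabs (g - g0) / d0)) by (field; lra).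
      lra. }
  assert (Hex : forall g, exists l, (Rabs (g - g0) < eta -> F l g = 0%C /\ Cmod (l - mu) <= C0 * Rabs (g - g0))
                             /\ (g = g0 -> l = mu)).
  { intros g. destruct (Req_dec g g0) as [->|hne].
    - exists mu. split; auto. intros _. split; auto.
      replace (mu - mu)%C with (RtoC 0) by ring. rewrite Cmod_0. rewrite Rminus_eq_0, Rabs_R0. lra.
    - destruct (Rlt_dec (Rabs (g - g0)) eta) as [hl|hl].
      + destruct (Hfix g hl) as [l Hl]. exists l. split; auto. intros; contradiction.
      + exists mu. split. intros; contradiction. auto. }
  set (lam := fun g => proj1_sig (constructive_indefinite_description _ (Hex g))).
  assert (Hlam : forall g, (Rabs (g - g0) < eta -> F (lam g) g = 0%C /\ Cmod (lam g - mu) <= C0 * Rabs (g - g0))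
                             /\ (g = g0 -> lam g = mu)).
  { intros g. unfold lam. destruct (constructive_indefinite_description _ (Hex g)) as [l Hl]. exact Hl. }
  exists lam. split. apply Hlam; auto. split.
  { exists eta. split; auto. intros g Hg. apply Hlam; auto. }
  apply is_derive_RC_of. intros eps Heps.
  destruct (KL lam C0 eta Heta HC0 (fun g Hg => proj1 (proj1 (Hlam g) Hg)) (fun g Hg => proj2 (proj1 (Hlam g) Hg))
     (eps * d0) ltac:(nra)) as [dl [Hdl Hl]].
  exists dl. split; auto. intros y Hy.
  rewrite (proj2 (Hlam g0) eq_refl).
  replace (lam y - mu - RtoC (y - g0) * (- Fg / D0))%C with ((D0 * (lam y - mu) + RtoC (y - g0) * Fg) / D0)%C
    by (field; auto).
  rewrite Cmod_div; auto. fold d0. apply Rmult_le_reg_r with d0; auto. field_simplify; try lra.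
  specialize (Hl y Hy). lra.
Qed.

Lemma ift_unique (lam : R -> C) (d : C) : lam g0 = mu ->
  (exists e, 0 < e /\ forall g, Rabs (g - g0) < e -> F (lam g) g = 0%C) ->
  is_derive (K := R_AbsRing) (V := C_R_NormedModule) lam g0 d ->
  d = (- Fg / D0)%C.
Proof.
  intros H0 [e [He Hr]] Hd.
  pose proof (is_derive_RC_to _ _ _ Hd) as Hd'. clear Hd.
  destruct (Hd' 1 ltac:(lra)) as [d1 [Hd1 H1]].
  set (C0 := Cmod d + 1). assert (HC0 : 0 <= C0) by (pose proof (Cmod_ge_0 d); unfold C0; lra).
  assert (Hb : forall g, Rabs (g - g0) < Rmin e d1 -> Cmod (lam g - mu) <= C0 * Rabs (g - g0)).
  { intros g Hg. assert (Rabs (g - g0) < d1) by (eapply Rlt_le_trans; [apply Hg|apply Rmin_r]).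
    specialize (H1 g H).
    replace (lam g - mu)%C with ((lam g - mu - RtoC (g - g0) * d) + RtoC (g - g0) * d)%C by ring.
    eapply Rle_trans. apply Cmod_triangle. rewrite Cmod_mult, Cmod_R. rewrite H0 in H1. unfold C0. nra. }
  assert (Hr' : forall g, Rabs (g - g0) < Rmin e d1 -> F (lam g) g = 0%C).
  { intros g Hg. apply Hr. eapply Rlt_le_trans; [apply Hg|apply Rmin_l]. }
  pose proof (KL lam C0 (Rmin e d1) ltac:(apply Rmin_pos; auto) HC0 Hr' Hb) as HK.
  set (d0 := Cmod D0). assert (Hd0 : 0 < d0) by (apply Cmod_gt_0; auto).
  assert (HZ : (D0 * d + Fg = 0)%C).
  { apply Cmod_small_eq. intros eps Heps.
    replace (D0 * d + Fg - 0)%C with (D0 * d + Fg)%C by ring.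
    apply Rle_trans with (eps * 1 + 0). 2: lra.
    assert (Cmod (D0 * d + Fg)%C <= (eps / (d0 + 1))).
    2:{ apply Rle_trans with (eps / (d0 + 1)); auto. apply Rmult_le_reg_r with (d0 + 1). lra. field_simplify; nra. }
    set (ep := eps / (d0 + 1) / (d0 + 1)).
    assert (Hep : 0 < ep) by (unfold ep; repeat apply Rdiv_lt_0_compat; lra).
    destruct (HK ep Hep) as [da [Hda Ha]].
    destruct (Hd' ep Hep) as [db [Hdb Hb']].
    set (t := Rmin da db / 2).
    assert (Ht : 0 < t) by (unfold t; assert (0 < Rmin da db) by (apply Rmin_pos; auto); lra).
    assert (Hta : Rabs (g0 + t - g0) < da).
    { replace (g0 + t - g0) with t by ring. rewrite Rabs_right by lra. unfold t.
      pose proof (Rmin_l da db). lra. }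
    assert (Htb : Rabs (g0 + t - g0) < db).
    { replace (g0 + t - g0) with t by ring. rewrite Rabs_right by lra. unfold t.
      pose proof (Rmin_r da db). lra. }
    specialize (Ha _ Hta). specialize (Hb' _ Htb). rewrite H0 in Hb'.
    replace (g0 + t - g0) with t in Ha, Hb' by ring. rewrite Rabs_right in Ha, Hb' by lra.
    assert (E : (RtoC t * (D0 * d + Fg))%C = ((D0 * (lam (g0 + t)%R - mu) + RtoC t * Fg) - D0 * (lam (g0 + t)%R - mu - RtoC t * d))%C) by ring.
    assert (Cmod (RtoC t * (D0 * d + Fg))%C <= ep * t + d0 * (ep * t)).
    { rewrite E. unfold Cminus. eapply Rle_trans. apply Cmod_triangle. rewrite Cmod_opp, Cmod_mult. fold d0.
      apply Rplus_le_compat; [exact Ha|]. apply Rmult_le_compat_l; [lra| exact Hb']. }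
    rewrite Cmod_mult, Cmod_R, Rabs_right in H by lra.
    apply Rmult_le_reg_l with t; auto.
    apply Rle_trans with (ep * t + d0 * (ep * t)); [lra|].
    unfold ep. replace ((eps / (d0 + 1) / (d0 + 1)) * t + d0 * ((eps / (d0 + 1) / (d0 + 1)) * t))
      with (t * (eps / (d0 + 1))) by (field; lra). lra. }
  replace d with ((D0 * d + Fg - Fg) / D0)%C by (field; auto). rewrite HZ. field; auto.
Qed.

End IFT.

Definition Ee (T : R) (l : C) : C := Cexp (RtoC (-(2*T)) * l).
Definition D0f (B1 B2 T : R) (mu : C) (g0 : R) : C :=
  (mu + mu + RtoC (g0*B1) + RtoC (g0^2*B2) * (RtoC (-(2*T)) * Ee T mu))%C.
Definition Fgf (B0 B1 B2 T : R) (mu : C) (g0 : R) : C :=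
  (RtoC B1 * mu + RtoC (2*g0*B0) + RtoC (2*g0*B2) * Ee T mu)%C.

Lemma id_SD (l1 l2 mu e1 e2 em : C) (g g0 B0 B1 B2 a : R) :
 ((l1*l1 + RtoC(g*B1)*l1 + RtoC(g^2*B0) + RtoC(g^2*B2)*e1)
  - (l2*l2 + RtoC(g*B1)*l2 + RtoC(g^2*B0) + RtoC(g^2*B2)*e2)
  - (mu+mu + RtoC(g0*B1) + RtoC(g0^2*B2)*(RtoC a * em))*(l1-l2))%C
 = ((l1-l2)*((l1-mu)+(l2-mu)+RtoC((g-g0)*B1)) + RtoC(g^2*B2)*(e1 - e2 - RtoC a*em*(l1-l2))
    + RtoC((g^2-g0^2)*B2*a)*em*(l1-l2))%C.
Proof.
  destruct l1, l2, mu, e1, e2, em. apply injective_projections; simpl; ring.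
Qed.

Lemma id_Dg (mu em : C) (g g0 B0 B1 B2 : R) :
 ((mu*mu + RtoC(g*B1)*mu + RtoC(g^2*B0) + RtoC(g^2*B2)*em)
  - (mu*mu + RtoC(g0*B1)*mu + RtoC(g0^2*B0) + RtoC(g0^2*B2)*em)
  - RtoC (g - g0) * (RtoC B1 * mu + RtoC (2*g0*B0) + RtoC (2*g0*B2) * em))%C
 = (RtoC ((g - g0)^2) * (RtoC B0 + RtoC B2 * em))%C.
Proof.
  destruct mu, em. apply injective_projections; simpl; ring.
Qed.

Lemma SD_M (B0 B1 B2 T : R) (mu : C) (g0 : R) (eps : R) : 0 < eps -> exists delta, 0 < delta /\
  forall l1 l2 g, Cmod (l1 - mu) < delta -> Cmod (l2 - mu) < delta -> Rabs (g - g0) < delta ->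
  Cmod (M_char B0 B1 B2 T l1 g - M_char B0 B1 B2 T l2 g - D0f B1 B2 T mu g0 * (l1 - l2))%C
    <= eps * Cmod (l1 - l2)%C.
Proof.
  intros Heps.
  set (a := -(2*T)). set (G := Rabs g0 + 1). set (m := Cmod (Ee T mu)).
  assert (HG : 1 <= G) by (unfold G; pose proof (Rabs_pos g0); lra).
  assert (Hm : 0 <= m) by apply Cmod_ge_0.
  set (P := G^2 * Rabs B2 + 1).
  assert (HP : 1 <= P) by (unfold P; pose proof (Rabs_pos B2); nra).
  set (Q := 2 + Rabs B1 + 2 * G * Rabs B2 * Rabs a * m).
  assert (HQ : 2 <= Q) by (unfold Q; pose proof (Rabs_pos B1); pose proof (Rabs_pos B2); pose proof (Rabs_pos a);
     assert (0 <= G * Rabs B2 * Rabs a * m) by (repeat apply Rmult_le_pos; lra); lra).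
  destruct (SD_E a mu (eps / (2 * P)) ltac:(apply Rdiv_lt_0_compat; lra)) as [dE [HdE HE]].
  set (del := Rmin 1 (Rmin dE (eps / (2 * (Q + 1))))).
  assert (Hdel : 0 < del) by (apply Rmin_pos; [lra|apply Rmin_pos; auto; apply Rdiv_lt_0_compat; lra]).
  exists del. split; auto.
  intros l1 l2 g H1 H2 Hg.
  assert (Hd1 : del <= 1) by apply Rmin_l.
  assert (Hd2 : del <= dE) by (eapply Rle_trans; [apply Rmin_r|apply Rmin_l]).
  assert (Hd3 : del <= eps / (2 * (Q + 1))) by (eapply Rle_trans; [apply Rmin_r|apply Rmin_r]).
  unfold M_char, D0f. fold a. unfold Ee. fold a.
  rewrite id_SD.
  set (dl := Cmod (l1 - l2)%C). assert (Hdl : 0 <= dl) by apply Cmod_ge_0.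
  specialize (HE l1 l2 ltac:(lra) ltac:(lra)). fold dl in HE.
  assert (Hgg : Rabs g <= G).
  { unfold G. replace g with ((g - g0) + g0) by ring. eapply Rle_trans. apply Rabs_triang. lra. }
  assert (Hg2 : g^2 <= G^2). { apply Rabs_sq_le. lra. }
  assert (Hgp : Rabs (g + g0) <= 2 * G).
  { eapply Rle_trans. apply Rabs_triang. unfold G in *. lra. }
  assert (T1 : Cmod ((l1 - l2) * ((l1 - mu) + (l2 - mu) + RtoC ((g - g0) * B1)))%C <= dl * (del * (2 + Rabs B1))).
  { rewrite Cmod_mult. fold dl. apply Rmult_le_compat_l; auto.
    eapply Rle_trans. apply Cmod_triangle. eapply Rle_trans. apply Rplus_le_compat_r. apply Cmod_triangle.
    rewrite Cmod_R, Rabs_mult. pose proof (Rabs_pos B1).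
    assert (Rabs (g - g0) * Rabs B1 <= del * Rabs B1) by (apply Rmult_le_compat_r; lra). lra. }
  assert (T2 : Cmod (RtoC (g^2 * B2) * (Cexp (RtoC a * l1) - Cexp (RtoC a * l2) - RtoC a * Cexp (RtoC a * mu) * (l1 - l2)))%C
               <= P * (eps / (2 * P) * dl)).
  { rewrite Cmod_mult, Cmod_R, Rabs_mult.
    apply Rmult_le_compat; auto. apply Rmult_le_pos; apply Rabs_pos. apply Cmod_ge_0.
    rewrite (Rabs_right (g^2)) by (apply Rle_ge; nra). unfold P. pose proof (Rabs_pos B2).
    assert (g^2 * Rabs B2 <= G^2 * Rabs B2) by (apply Rmult_le_compat_r; lra). lra. }
  assert (T3 : Cmod (RtoC ((g^2 - g0^2) * B2 * a) * Cexp (RtoC a * mu) * (l1 - l2))%C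
               <= del * (2 * G * Rabs B2 * Rabs a * m) * dl).
  { rewrite !Cmod_mult, Cmod_R, !Rabs_mult. fold dl. change (Cmod (Cexp (RtoC a * mu))) with m.
    replace (g^2 - g0^2) with ((g - g0) * (g + g0)) by ring. rewrite Rabs_mult.
    pose proof (Rabs_pos (g - g0)). pose proof (Rabs_pos (g + g0)). pose proof (Rabs_pos B2). pose proof (Rabs_pos a).
    replace (del * (2 * G * Rabs B2 * Rabs a * m) * dl) with ((del * (2 * G)) * Rabs B2 * Rabs a * m * dl) by ring.
    do 4 (apply Rmult_le_compat_r; auto).
    apply Rmult_le_compat; lra. }
  eapply Rle_trans. apply Cmod_triangle. eapply Rle_trans. apply Rplus_le_compat_r. apply Cmod_triangle.
  assert (E1 : P * (eps / (2 * P)) = eps / 2) by (field; lra).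
  assert (E2 : del * Q <= eps / 2).
  { apply Rle_trans with (eps / (2 * (Q + 1)) * Q). apply Rmult_le_compat_r; lra.
    apply Rmult_le_reg_r with (2 * (Q + 1)). lra. field_simplify; nra. }
  unfold Q in E2.
  assert (dl * (del * (2 + Rabs B1)) + P * (eps / (2 * P) * dl) + del * (2 * G * Rabs B2 * Rabs a * m) * dl
          = dl * (del * (2 + Rabs B1 + 2 * G * Rabs B2 * Rabs a * m)) + (eps / 2) * dl) by (rewrite <- E1; ring).
  assert (dl * (del * (2 + Rabs B1 + 2 * G * Rabs B2 * Rabs a * m)) <= dl * (eps / 2)) by (apply Rmult_le_compat_l; lra).
  lra.
Qed.

Lemma Dg_M (B0 B1 B2 T : R) (mu : C) (g0 : R) (eps : R) : 0 < eps -> exists delta, 0 < delta /\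
  forall g, Rabs (g - g0) < delta ->
  Cmod (M_char B0 B1 B2 T mu g - M_char B0 B1 B2 T mu g0 - RtoC (g - g0) * Fgf B0 B1 B2 T mu g0)%C
    <= eps * Rabs (g - g0).
Proof.
  intros Heps. set (K := Cmod (RtoC B0 + RtoC B2 * Ee T mu)%C).
  assert (HK : 0 <= K) by apply Cmod_ge_0.
  exists (eps / (K + 1)). split. apply Rdiv_lt_0_compat; lra.
  intros g Hg. unfold M_char, Fgf. unfold Ee in *. rewrite id_Dg. fold (Ee T mu). fold K.
  rewrite Cmod_mult, Cmod_R. rewrite <- RPow_abs.
  pose proof (Rabs_pos (g - g0)).
  match goal with |- Rabs ?x ^ 2 * ?k <= _ => replace (Rabs x ^ 2 * k) with (Rabs x * (Rabs x * k)) by ring;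
     replace k with K by reflexivity end.
  rewrite (Rmult_comm eps). apply Rmult_le_compat_l; auto.
  apply Rle_trans with (eps / (K + 1) * K). apply Rmult_le_compat_r; lra.
  apply Rmult_le_reg_r with (K + 1). lra. field_simplify; nra.
Qed.

Lemma Ee_iw T w : Ee T (0, w) = (cos (2 * T * w), - sin (2 * T * w)).
Proof.
  unfold Ee, Cexp, Cmult, RtoC; simpl.
  replace (-(2*T)*0 - 0*w) with 0 by ring. replace (-(2*T)*w + 0*0) with (-(2*T*w)) by ring.
  rewrite exp_0, cos_neg, sin_neg, !Rmult_1_l. reflexivity.
Qed.

Lemma M_iw B0 B1 B2 T w g : M_char B0 B1 B2 T (0, w) g =
  (- w^2 + g^2*B0 + g^2*B2*cos (2*T*w), g*B1*w - g^2*B2*sin (2*T*w)).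
Proof.
  unfold M_char. change (Cexp (RtoC (-(2*T)) * (0,w))) with (Ee T (0,w)). rewrite Ee_iw.
  apply injective_projections; simpl; ring.
Qed.

Lemma D0_iw B1 B2 T w g : D0f B1 B2 T (0, w) g =
  (g*B1 - 2*T*g^2*B2*cos (2*T*w), 2*w + 2*T*g^2*B2*sin (2*T*w)).
Proof.
  unfold D0f. rewrite Ee_iw. apply injective_projections; simpl; ring.
Qed.

Lemma Fg_iw B0 B1 B2 T w g : Fgf B0 B1 B2 T (0, w) g =
  (2*g*B0 + 2*g*B2*cos (2*T*w), B1*w - 2*g*B2*sin (2*T*w)).
Proof.
  unfold Fgf. rewrite Ee_iw. apply injective_projections; simpl; ring.
Qed.

Lemma root_Q B0 B1 B2 T w g : M_char B0 B1 B2 T (0, w) g = 0%C ->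
  (w^2 - g^2*B0)^2 + g^2*B1^2*w^2 = g^4*B2^2.
Proof.
  rewrite M_iw. intros H. injection H as H1 H2.
  pose proof (sin2_cos2 (2*T*w)) as S. unfold Rsqr in S.
  assert (E1 : g^2*B2*cos (2*T*w) = w^2 - g^2*B0) by lra.
  assert (E2 : g^2*B2*sin (2*T*w) = g*B1*w) by lra.
  replace (g^4*B2^2) with ((g^2*B2)^2 * (sin (2*T*w) * sin (2*T*w) + cos (2*T*w) * cos (2*T*w))) by (rewrite S; ring).
  rewrite <- E1. replace ((g^2*B2)^2 * (sin (2*T*w) * sin (2*T*w) + cos (2*T*w) * cos (2*T*w)))
   with ((g^2*B2*cos (2*T*w))^2 + (g^2*B2*sin (2*T*w))^2) by ring.
  rewrite E2. ring.
Qed.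

Lemma core (B0 B1 B2 T w g : R) : 0 < T -> 0 < w -> 0 < g -> 0 < B2 -> B0^2 < B2^2 ->
  - w^2 + g^2*B0 + g^2*B2*cos (2*T*w) = 0 ->
  g*B1*w - g^2*B2*sin (2*T*w) = 0 ->
  M_char B0 B1 B2 T (0, w) g = 0%C /\
  (exists d : C,
     is_derive (K := C_AbsRing) (V := C_NormedModule)
       (fun lam : C => M_char B0 B1 B2 T lam g) (0, w) d /\ d <> 0%C) /\
  (exists lam : R -> C, root_branch B0 B1 B2 T w g lam /\
     exists d : C, is_derive (K := R_AbsRing) (V := C_R_NormedModule) lam g d) /\
  (forall (lam : R -> C) (d : C), root_branch B0 B1 B2 T w g lam ->
     is_derive (K := R_AbsRing) (V := C_R_NormedModule) lam g d ->
     Re d = transversality_value B0 B1 T w g) /\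
  0 < transversality_value B0 B1 T w g /\
  (forall n : Z, n <> 1%Z -> n <> (-1)%Z ->
     M_char B0 B1 B2 T (0, IZR n * w) g <> 0%C).
Proof.
  intros HT Hw Hg HB2 HB R1 R2.
  set (c := cos (2*T*w)) in *. set (s := sin (2*T*w)) in *.
  assert (Hroot : M_char B0 B1 B2 T (0, w) g = 0%C).
  { rewrite M_iw. fold c s. rewrite R1, R2. reflexivity. }
  pose proof (root_Q _ _ _ _ _ _ Hroot) as HQ.
  assert (Hpos1 : 0 < w^2 + g^2*(B1^2 - 2*B0)).
  { assert (w^2 * (w^2 + g^2*(B1^2 - 2*B0)) = g^4 * (B2^2 - B0^2)) by nra.
    assert (0 < g^4 * (B2^2 - B0^2)) by (apply Rmult_lt_0_compat; [apply pow_lt; lra | lra]).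
    assert (0 < w^2) by (apply pow_lt; lra). nra. }
  set (p := g*B1 - 2*T*g^2*B2*c). set (q := 2*w + 2*T*g^2*B2*s).
  assert (Ep : p = g*B1 - 2*T*w^2 + 2*T*g^2*B0) by (unfold p; nra).
  assert (Eq : q = 2*w + 2*T*g*B1*w) by (unfold q; nra).
  assert (Hn : 0 < p^2 + q^2).
  { destruct (Req_dec q 0) as [hq|hq].
    - destruct (Req_dec p 0) as [hp|hp].
      + exfalso. rewrite Eq in hq. rewrite Ep in hp.
        assert (Hu : T * (g * B1) = -1).
        { assert (2 * w * (1 + T*g*B1) = 0) by (rewrite <- hq; ring).
          apply Rmult_integral in H. destruct H; [lra|]. lra. }
        assert (Hu' : g * B1 = - / T) by (apply Rmult_eq_reg_l with T; [rewrite Hu; field; lra | lra]).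
        assert (HX : w^2 - g^2*B0 = - / (2 * T^2)).
        { apply Rmult_eq_reg_l with (2*T). 2: lra.
          replace (2 * T * (w^2 - g^2*B0)) with (g*B1 - (g*B1 - 2*T*w^2 + 2*T*g^2*B0)) by ring.
          rewrite hp, Hu'. field. lra. }
        assert (HB1 : g^2*B1^2 = / T^2) by (replace (g^2*B1^2) with ((g*B1)^2) by ring; rewrite Hu'; field; lra).
        assert (g^4 * B0^2 = (w^2 + / (2*T^2))^2).
        { replace (g^4 * B0^2) with ((g^2*B0)^2) by ring. f_equal. lra. }
        assert (g^4 * B2^2 = / (4 * T^4) + w^2 / T^2).
        { rewrite <- HQ, HX. replace (g^2*B1^2*w^2) with ((g^2*B1^2)*w^2) by ring. rewrite HB1. field. lra. }
        assert (g^4 * B0^2 < g^4 * B2^2) by (apply Rmult_lt_compat_l; [apply pow_lt; lra| lra]).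
        assert (0 < w^4) by (apply pow_lt; lra).
        assert ((w^2 + / (2*T^2))^2 = w^4 + w^2 / T^2 + / (4 * T^4)) by (field; lra).
        lra.
      + nra.
    - nra. }
  set (D0 := D0f B1 B2 T (0, w) g). set (Fg := Fgf B0 B1 B2 T (0, w) g).
  assert (HD0v : D0 = (p, q)) by (unfold D0; rewrite D0_iw; reflexivity).
  assert (HD0 : D0 <> 0%C).
  { rewrite HD0v. intros H. injection H as h1 h2. rewrite h1, h2 in Hn. lra. }
  set (F := fun l g' => M_char B0 B1 B2 T l g').
  assert (HSD := fun eps (h : 0 < eps) => SD_M B0 B1 B2 T (0, w) g eps h).
  assert (HDg := fun eps (h : 0 < eps) => Dg_M B0 B1 B2 T (0, w) g eps h).
  assert (Hunique : forall lam d, root_branch B0 B1 B2 T w g lam ->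
     is_derive (K := R_AbsRing) (V := C_R_NormedModule) lam g d -> d = (- Fg / D0)%C).
  { intros lam d [H0 He] Hd. exact (ift_unique F (0, w) g D0 Fg HD0 Hroot HSD HDg lam d H0 He Hd). }
  set (r := 2*g*B0 + 2*g*B2*c). set (t := B1*w - 2*g*B2*s).
  assert (HFgv : Fg = (r, t)) by (unfold Fg; rewrite Fg_iw; reflexivity).
  assert (Er : r = 2 * w^2 / g).
  { unfold r. apply Rmult_eq_reg_l with g. 2: lra. field_simplify; [|lra]. nra. }
  assert (Et : t = - B1 * w).
  { unfold t. apply Rmult_eq_reg_l with g. 2: lra. nra. }
  assert (HRe : forall d, d = (- Fg / D0)%C -> Re d = - (p * r + q * t) / (p^2 + q^2)).
  { intros d Hd. assert (E : (D0 * d = - Fg)%C) by (rewrite Hd; field; auto).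
    rewrite HD0v, HFgv in E. destruct d as [x y]. injection E as E1 E2. simpl.
    assert (X : x*(p^2+q^2) = -(p*r+q*t)) by
      (replace (x*(p^2+q^2)) with (p*(p*x - q*y) + q*(p*y+q*x)) by ring; rewrite E1, E2; ring).
    replace (p*(p*1)+q*(q*1)) with (p^2+q^2) by ring. rewrite <- X. field. lra. }
  assert (Hval : - (p * r + q * t) / (p^2 + q^2) = transversality_value B0 B1 T w g).
  { unfold transversality_value. rewrite Er, Et.
    assert (p^2 + q^2 = (g*B1 - 2*T*w^2 + 2*T*g^2*B0)^2 + (2*w + 2*T*g*B1*w)^2) by (rewrite Ep, Eq; ring).
    rewrite Ep, Eq. rewrite Ep, Eq in Hn.
    assert ((g ^ 2 * B1 - 2 * g * T * w ^ 2 + 2 * g ^ 3 * T * B0) ^ 2 + (2 * g * w + 2 * g ^ 2 * T * B1 * w) ^ 2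
      = g^2 * ((g*B1 - 2*T*w^2 + 2*T*g^2*B0)^2 + (2*w + 2*T*g*B1*w)^2)) by ring.
    assert (0 < g^2) by (apply pow_lt; lra).
    assert (0 < g^2 * ((g*B1 - 2*T*w^2 + 2*T*g^2*B0)^2 + (2*w + 2*T*g*B1*w)^2)) by (apply Rmult_lt_0_compat; lra).
    field. repeat split; lra. }
  split; [exact Hroot|].
  split.
  { exists D0. split; auto. apply is_derive_C_of. intros eps Heps.
    destruct (SD_M B0 B1 B2 T (0, w) g eps Heps) as [dl [Hdl H]].
    exists dl. split; auto. intros y Hy.
    assert (Hm : Cmod ((0, w) - (0, w))%C < dl) by (replace ((0, w) - (0, w))%C with (RtoC 0) by ring; rewrite Cmod_0; lra).
    specialize (H y (0, w) g Hy Hm ltac:(rewrite Rminus_eq_0, Rabs_R0; lra)).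
    rewrite (Cmult_comm (y - (0,w))%C). exact H. }
  split.
  { destruct (ift_exists F (0, w) g D0 Fg HD0 Hroot HSD HDg) as [lam [H0 [He Hd]]].
    exists lam. split. split; auto. exists (- Fg / D0)%C. exact Hd. }
  split.
  { intros lam d Hb Hd. rewrite <- Hval. apply HRe. eapply Hunique; eauto. }
  split.
  { rewrite <- Hval. rewrite Er, Et, Ep, Eq. rewrite Ep, Eq in Hn.
    apply Rdiv_lt_0_compat; auto.
    replace (- ((g * B1 - 2 * T * w ^ 2 + 2 * T * g ^ 2 * B0) * (2 * w ^ 2 / g) +
        (2 * w + 2 * T * g * B1 * w) * (- B1 * w))) with
      (2 * T * w^2 / g * (2 * w^2 + g^2 * (B1^2 - 2 * B0))) by (field; lra).
    apply Rmult_lt_0_compat. apply Rdiv_lt_0_compat; [|lra]. assert (0 < w^2) by (apply pow_lt; lra). nra.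
    assert (0 < w^2) by (apply pow_lt; lra). lra. }
  { intros n hn1 hn2 H. pose proof (root_Q _ _ _ _ _ _ H) as HQ'.
    set (w' := IZR n * w) in *.
    assert ((w^2 - w'^2) * (w^2 + w'^2 - 2*g^2*B0 + g^2*B1^2) = 0).
    { replace ((w^2 - w'^2) * (w^2 + w'^2 - 2*g^2*B0 + g^2*B1^2)) with
        (((w^2 - g^2*B0)^2 + g^2*B1^2*w^2) - ((w'^2 - g^2*B0)^2 + g^2*B1^2*w'^2)) by ring.
      rewrite HQ, HQ'. ring. }
    apply Rmult_integral in H0. destruct H0 as [H0|H0].
    - assert (Hn2 : (IZR n)^2 = 1).
      { unfold w' in H0. assert (w^2 * (1 - (IZR n)^2) = 0) by (rewrite <- H0; ring).
        apply Rmult_integral in H1. destruct H1. assert (0 < w^2) by (apply pow_lt; lra). lra. lra. }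
      assert (Hz : (n * n)%Z = 1%Z).
      { apply eq_IZR. rewrite mult_IZR. simpl in Hn2. lra. }
      nia.
    - assert (0 <= w'^2) by (apply pow2_ge_0). lra. }
Qed.

Lemma cos_Z x j : cos (x + 2 * PI * IZR j) = cos x.
Proof.
  rewrite cos_plus.
  assert (Hs : sin (2 * PI * IZR j) = 0).
  { apply sin_eq_0_1. exists (2 * j)%Z. rewrite mult_IZR. simpl. ring. }
  assert (Hs1 : sin (PI * IZR j) = 0).
  { apply sin_eq_0_1. exists j. ring. }
  assert (Hc : cos (2 * PI * IZR j) = 1).
  { replace (2 * PI * IZR j) with (2 * (PI * IZR j)) by ring. rewrite cos_2a_sin, Hs1. ring. }
  rewrite Hs, Hc. ring.
Qed.

Theorem proposition1 (a b c s0 u0 v0 omega0 gamma0 : R)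
  (ha : 0 < a) (hb : 0 < b) (hc : 0 <= c) (hs0 : 1 < s0)
  (hu0 : 0 < u0) (hv0 : 0 < v0)
  (heq1 : u0 ^ 3 + c * u0 = (a + 1) / b * u0 ^ 2 + a * c / b)
  (heq2 : v0 = u0 ^ 2 + c)
  (hcase : hopf_case_i (b0 b u0 v0) (b1 b u0 v0) (b2 u0 v0) (tau s0) omega0 gamma0
        \/ hopf_case_ii (b1 b u0 v0) (b2 u0 v0) (tau s0) omega0 gamma0) :
  let B0 := b0 b u0 v0 in
  let B1 := b1 b u0 v0 in
  let B2 := b2 u0 v0 in
  let T := tau s0 in
  (* i omega0 is a root of M(., gamma0) *)
  M_char B0 B1 B2 T (0, omega0) gamma0 = 0%C /\
  (* the root is simple: the complex derivative in lambda is nonzero *)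
  (exists d : C,
     is_derive (K := C_AbsRing) (V := C_NormedModule)
       (fun lam : C => M_char B0 B1 B2 T lam gamma0) (0, omega0) d /\ d <> 0%C) /\
  (* transversality: a differentiable root branch through i omega0 exists,
     and along every such branch Re(d lambda / d gamma) at gamma0 equals the
     given formula, which is positive *)
  (exists lam : R -> C, root_branch B0 B1 B2 T omega0 gamma0 lam /\
     exists d : C, is_derive (K := R_AbsRing) (V := C_R_NormedModule) lam gamma0 d) /\
  (forall (lam : R -> C) (d : C), root_branch B0 B1 B2 T omega0 gamma0 lam ->
     is_derive (K := R_AbsRing) (V := C_R_NormedModule) lam gamma0 d ->
     Re d = transversality_value B0 B1 T omega0 gamma0) /\
  0 < transversality_value B0 B1 T omega0 gamma0 /\
  (* non-resonance: n i omega0 is not a root for n not in {1, -1} *)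
  (forall n : Z, n <> 1%Z -> n <> (-1)%Z ->
     M_char B0 B1 B2 T (0, IZR n * omega0) gamma0 <> 0%C).
Proof.
  intros B0 B1 B2 T.
  assert (HT : 0 < T) by (unfold T, tau; lra).
  assert (HB2 : 0 < B2).
  { unfold B2, b2. apply Rdiv_lt_0_compat. assert (0 < u0^3) by (apply pow_lt; lra). lra.
    apply pow_lt; lra. }
  assert (HB10 : B1 = B0 + 1) by reflexivity.
  destruct hcase as [Hi | Hii].
  - unfold hopf_case_i in Hi. destruct Hi as [HB1 [HB0 Hi]]. cbv zeta in Hi.
    destruct Hi as [j [th [Hth [Hw [Hw0 [Hs Hg]]]]]].
    fold B0 B1 B2 T in HB1, HB0, Hth, Hw, Hw0, Hs, Hg.
    set (D := B1 ^ 2 * (B1 ^ 2 - 4 * B0) + 4 * B2 ^ 2) in *.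
    set (Om := (- B1 ^ 2 + sqrt D) / (2 * B2)) in *.
    assert (HBB : B0^2 < B2^2) by lra.
    assert (HB0a : - B2 < B0 < B2) by (split; nra).
    assert (HD : 0 <= D) by (unfold D; nra).
    assert (HsD : sqrt D ^ 2 = D) by (apply pow2_sqrt; auto).
    assert (HOm : 2 * B2 * Om = - B1^2 + sqrt D) by (unfold Om; field; lra).
    assert (HB1sq : 0 < B1^2) by (apply pow2_gt_0; auto). 
    assert (Hle1 : Om <= 1).
    { assert (sqrt D <= 2 * B2 + B1^2).
      { rewrite <- (sqrt_pow2 (2 * B2 + B1^2)) by lra. apply sqrt_le_1_alt. unfold D. nra. }
      nra. }
    assert (Hge1 : -1 <= Om).
    { assert (B1^2 - 2 * B2 <= sqrt D).
      { destruct (Rle_dec (B1^2 - 2*B2) 0). pose proof (sqrt_pos D). lra.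
        rewrite <- (sqrt_pow2 (B1^2 - 2*B2)) by lra. apply sqrt_le_1_alt. unfold D. nra. }
      nra. }
    assert (Hquad : B2^2 * (1 - Om^2) = B1^2 * (B0 + B2 * Om)).
    { assert ((2 * B2 * Om + B1^2)^2 = D) by (rewrite HOm; rewrite <- HsD at 2; ring).
      unfold D in H. nra. }
    assert (Hcos : cos (2 * T * omega0) = Om).
    { replace (2 * T * omega0) with (th + 2 * PI * IZR j) by (rewrite Hw; field; lra).
      rewrite cos_Z. destruct Hth as [-> | ->]. apply cos_acos; lra. rewrite cos_neg. apply cos_acos; lra. }
    replace (2 * omega0 * T) with (2 * T * omega0) in Hs, Hg by ring.
    set (s := sin (2 * T * omega0)) in *.
    assert (Hs0 : s <> 0) by (intro h; rewrite h in Hs; lra).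
    assert (Hs2 : s^2 = 1 - Om^2).
    { pose proof (sin2_cos2 (2 * T * omega0)) as S. unfold Rsqr in S. fold s in S. rewrite Hcos in S. nra. }
    assert (h1 : gamma0 * B2 * s = B1 * omega0) by (rewrite Hg; field; lra).
    assert (Hg0 : 0 < gamma0).
    { assert (gamma0 * (B2 * s^2) = B1 * s * omega0) by (replace (B1 * s * omega0) with (s * (B1*omega0)) by ring; rewrite <- h1; ring).
      assert (0 < B2 * s^2) by (apply Rmult_lt_0_compat; auto; apply pow2_gt_0; auto).
      assert (0 < B1 * s * omega0) by (apply Rmult_lt_0_compat; auto).
      nra. }
    apply core; auto.
    + rewrite Hcos.
      assert (gamma0^2 * (B2^2 * s^2) = B1^2 * omega0^2) by (replace (B1^2 * omega0^2) with ((B1*omega0)^2) by ring; rewrite <- h1; ring).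
      rewrite Hs2, Hquad in H.
      assert (gamma0^2 * (B0 + B2 * Om) = omega0^2).
      { apply Rmult_eq_reg_l with (B1^2). 2: lra. rewrite <- H. ring. }
      nra.
    + fold s. replace (gamma0^2 * B2 * s) with (gamma0 * (gamma0 * B2 * s)) by ring. rewrite h1. ring.
  - unfold hopf_case_ii in Hii. destruct Hii as [HB1 [HB2' [k [Hk [Hg Hw]]]]].
    fold B1 B2 T in HB1, HB2', Hg, Hw.
    assert (HB0 : B0 = -1) by lra.
    assert (HkR : 0 < INR k) by (apply lt_0_INR; auto).
    pose proof PI_RGT_0 as HPI.
    set (S := sqrt (B2 - 1)) in *.
    assert (HS : 0 < S) by (apply sqrt_lt_R0; lra).
    assert (HS2 : S^2 = B2 - 1) by (apply pow2_sqrt; lra).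
    assert (Harg : 2 * T * omega0 = 0 + 2 * INR k * PI) by (rewrite Hw; field; lra).
    assert (Hg0 : 0 < gamma0) by (rewrite Hg; apply Rdiv_lt_0_compat; nra).
    apply core; auto.
    + rewrite Hw. apply Rdiv_lt_0_compat; nra.
    + rewrite HB0. nra.
    + rewrite Harg, cos_period, cos_0, HB0, Hg, Hw.
      replace (B2) with (S^2 + 1) by lra. field. split; lra.
    + rewrite Harg, sin_period, sin_0, HB1. ring.
Qed.
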